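(* Let $k\ge1$ and let $\Gamma\subset\mathbb{R}_+^k$ be a nonempty compact set of possible allocations. For every random valuation $X$ with values in $\mathbb{R}_+^k$ and finite expectation ($\mathbb{E}\|X\|<\infty$) there exists a monotonic (incentive compatible and individually rational) $\Gamma$-mechanism $\mu$ with $R(\mu;X)=\textsc{MonRev}_\Gamma(X)$.
   Context: A $\Gamma$-mechanism $\mu=(q,s)$ consists of $q:\mathbb{R}_+^k\to\Gamma$ and $s:\mathbb{R}_+^k\to\mathbb{R}$; it is IC if $q(x)\cdot x-s(x)\ge q(y)\cdot x-s(y)$ for all $x,y\in\mathbb{R}_+^k$, and IR if $q(x)\cdot x-s(x)\ge0$ for all $x\in\mathbb{R}_+^k$. It is monotonic if $s(y)\ge s(x)$ whenever $y\ge x$ (coordinatewise) in $\mathbb{R}_+^k$. The revenue is $R(\mu;X):=\mathbb{E}[s(X)]$, and $\textsc{MonRev}_\Gamma(X)$ is the supremum of $R(\mu;X)$ over all monotonic IC and IR $\Gamma$-mechanisms $\mu$. *)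

(* Defs.v *)
From HB Require Import structures.
From mathcomp Require Import all_boot all_order all_algebra.
From mathcomp Require Import all_classical all_reals all_analysis.
Set Implicit Arguments. Unset Strict Implicit. Unset Printing Implicit Defensive.
Import Order.TTheory GRing.Theory Num.Theory.
Import numFieldTopology.Exports numFieldNormedType.Exports.
Local Open Scope classical_set_scope.
Local Open Scope ring_scope.

Definition nonneg_vec (R : realType) (k : nat) (x : 'rV[R]_k) : Prop :=
  forall i : 'I_k, 0 <= x 0 i.

Definition vec_le (R : realType) (k : nat) (x y : 'rV[R]_k) : Prop :=
  forall i : 'I_k, x 0 i <= y 0 i.

Definition dotv (R : realType) (k : nat) (x y : 'rV[R]_k) : R :=
  \sum_(i < k) x 0 i * y 0 i.

Definition rvec (d : measure_display) (T : measurableType d) (R : realType)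
  (k : nat) (X : 'I_k -> T -> R) (w : T) : 'rV[R]_k := \row_i X i w.

Definition maps_into_Gamma (R : realType) (k : nat) (Gamma : set 'rV[R]_k)
  (q : 'rV[R]_k -> 'rV[R]_k) : Prop :=
  forall x, nonneg_vec x -> Gamma (q x).

Definition IC (R : realType) (k : nat) (q : 'rV[R]_k -> 'rV[R]_k)
  (s : 'rV[R]_k -> R) : Prop :=
  forall x y, nonneg_vec x -> nonneg_vec y ->
    dotv (q y) x - s y <= dotv (q x) x - s x.

Definition IR (R : realType) (k : nat) (q : 'rV[R]_k -> 'rV[R]_k)
  (s : 'rV[R]_k -> R) : Prop :=
  forall x, nonneg_vec x -> 0 <= dotv (q x) x - s x.

Definition monotonic (R : realType) (k : nat) (s : 'rV[R]_k -> R) : Prop :=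
  forall x y, nonneg_vec x -> nonneg_vec y -> vec_le x y -> s x <= s y.

Definition revenue (d : measure_display) (T : measurableType d) (R : realType)
  (P : probability T R) (k : nat) (X : 'I_k -> T -> R)
  (s : 'rV[R]_k -> R) : \bar R :=
  (\int[P]_w (s (rvec X w))%:E)%E.

(* admissible: a monotonic IC and IR Gamma-mechanism (q,s) for which s(X)
   is a random variable, so that E[s(X)] makes sense *)
Definition admissible_mech (d : measure_display) (T : measurableType d)
  (R : realType) (k : nat) (Gamma : set 'rV[R]_k) (X : 'I_k -> T -> R)
  (q : 'rV[R]_k -> 'rV[R]_k) (s : 'rV[R]_k -> R) : Prop :=
  [/\ maps_into_Gamma Gamma q, IC q s, IR q s, monotonic s &
      measurable_fun setT (fun w => s (rvec X w))].

Definition MonRev (d : measure_display) (T : measurableType d) (R : realType)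
  (P : probability T R) (k : nat) (Gamma : set 'rV[R]_k)
  (X : 'I_k -> T -> R) : \bar R :=
  ereal_sup [set revenue P X s | s in
     [set s | exists q, admissible_mech Gamma X q s]].

(* Main.v *)
Require Import Defs.
From HB Require Import structures.
From mathcomp Require Import all_boot all_order all_algebra.
From mathcomp Require Import all_classical all_reals all_analysis.
From mathcomp Require Import measurable_realfun.
From mathcomp Require Import ring lra.
From mathcomp Require finmap.
Set Implicit Arguments. Unset Strict Implicit. Unset Printing Implicit Defensive.
Import Order.TTheory GRing.Theory Num.Theory.
Import numFieldTopology.Exports numFieldNormedType.Exports.
Local Open Scope classical_set_scope.
Local Open Scope ring_scope.
Lemma entry_le_norm (R : realType) (k : nat) (g : 'rV[R]_k) i : `|g 0 i| <= `|g|.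
Proof.
rewrite [X in _ <= X]mx_normrE.
exact: (le_bigmax _ (fun ij : 'I_1 * 'I_k => `|g ij.1 ij.2|) (0, i)).
Qed.

Lemma compact_bnd (R : realType) (k : nat) (G : set 'rV[R]_k) :
  compact G -> exists M, 0 <= M /\ forall g, G g -> forall i, `|g 0 i| <= M.
Proof.
move=> /compact_bounded [M [Mr HM]].
exists (`|M| + 1); split; first by rewrite addr_ge0.
move=> g Gg i; apply: le_trans (entry_le_norm g i) _.
apply: (HM (`|M| + 1)) => //.
by apply: le_lt_trans (real_ler_norm Mr) _; rewrite ltrDl.
Qed.

Section dotfacts.
Variables (R : realType) (k : nat).
Implicit Types (g x y : 'rV[R]_k).

Definition sig x := \sum_(i < k) x 0 i.
Definition dist1 x y := \sum_(i < k) `|x 0 i - y 0 i|.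

Lemma nonneg0 : nonneg_vec (0 : 'rV[R]_k).
Proof. by move=> i; rewrite mxE. Qed.

Lemma vec_le0 x : nonneg_vec x -> vec_le 0 x.
Proof. by move=> hx i; rewrite mxE. Qed.

Lemma dotv0 g : dotv g 0 = 0.
Proof. by rewrite /dotv big1 // => i _; rewrite mxE mulr0. Qed.

Lemma sig_ge0 x : nonneg_vec x -> 0 <= sig x.
Proof. by move=> hx; apply: sumr_ge0 => i _. Qed.

Lemma dotv_ge0 g x : nonneg_vec g -> nonneg_vec x -> 0 <= dotv g x.
Proof. by move=> hg hx; apply: sumr_ge0 => i _; apply: mulr_ge0. Qed.

Lemma dotv_le g x M : nonneg_vec g -> (forall i, g 0 i <= M) ->
  nonneg_vec x -> dotv g x <= M * sig x.
Proof.
move=> hg gM hx; rewrite /sig mulr_sumr; apply: ler_sum => i _.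
by apply: ler_wpM2r.
Qed.

Lemma dotv_lip g x y M : nonneg_vec g -> (forall i, g 0 i <= M) ->
  dotv g x - dotv g y <= M * dist1 x y.
Proof.
move=> hg gM; rewrite /dotv /dist1 -sumrB mulr_sumr; apply: ler_sum => i _.
rewrite -mulrBr; apply: le_trans (ler_norm _) _.
rewrite normrM ger0_norm //; apply: ler_wpM2r => //.
Qed.

Lemma dist1_ge0 x y : 0 <= dist1 x y.
Proof. by apply: sumr_ge0. Qed.

Lemma dist1C x y : dist1 x y = dist1 y x.
Proof. by apply: eq_bigr => i _; rewrite distrC. Qed.

End dotfacts.

Lemma dotv_norm_lip (R : realType) (k : nat) (c c' y : 'rV[R]_k) :
  `|dotv c y - dotv c' y| <= (\sum_(i < k) `|y 0 i|) * `|c - c'|.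
Proof.
rewrite /dotv -sumrB mulr_suml; apply: le_trans (ler_norm_sum _ _ _) _.
apply: ler_sum => i _; rewrite -mulrBl normrM mulrC; apply: ler_wpM2l => //.
by have := entry_le_norm (c - c') i; rewrite !mxE.
Qed.

Section diag.
Variable R : realType.

Lemma cvg_sub_ex (u v : R^nat) (L : R) :
  u @ \oo --> L ->
  (exists N, forall n, (N <= n)%N -> exists m, (n <= m)%N /\ v n = u m) ->
  v @ \oo --> L.
Proof.
move=> /cvgrPdist_lt H [N0 HN0]; apply/cvgrPdist_lt => e e0.
have [N _ HN] := H e e0.
exists (maxn N N0) => // n /=; rewrite geq_max => /andP[hN hN0].
have [m [nm ->]] := HN0 n hN0.
by apply: HN => /=; apply: leq_trans nm.
Qed.

Lemma incr_ge (h : nat -> nat) : increasing_seq h -> forall n, (n <= h n)%N.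
Proof.
move=> /increasing_seqP hi; elim => [|n IH] //.
by apply: leq_ltn_trans IH (hi n).
Qed.

Variable f : nat -> nat -> R.
Hypothesis fb : forall j, exists B : R, forall n, `|f n j| <= B.

Lemma bnd_sub (g : nat -> nat) j : bounded_fun (fun n => f (g n) j).
Proof.
have [B HB] := fb j.
exists B; split; first by rewrite (@ger0_real _ B) // (le_trans _ (HB 0%N)).
by move=> y yB n _; apply: le_trans (HB _) (ltW yB).
Qed.

Definition step (g : nat -> nat) (j : nat) : nat -> nat :=
  projT1 (cid2 (bolzano_weierstrass (bnd_sub g j))).

Lemma step_incr g j : increasing_seq (step g j).
Proof. by rewrite /step; case: (cid2 _). Qed.

Lemma step_cvg g j : cvgn (fun n => f (g (step g j n)) j).
Proof. by rewrite /step; case: (cid2 _). Qed.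

Fixpoint GG (j : nat) : nat -> nat :=
  match j with 0 => id | j'.+1 => fun n => GG j' (step (GG j') j' n) end.

Lemma GG_shift j m : exists r : nat -> nat,
  (forall x, (x <= r x)%N) /\ forall x, GG (j + m) x = GG j (r x).
Proof.
elim: m => [|m [r [rge rE]]].
  by exists id; split => // x; rewrite addn0.
exists (fun x => r (step (GG (j + m)) (j + m) x)); split.
  by move=> x; apply: leq_trans (rge _); apply: incr_ge; exact: step_incr.
by move=> x; rewrite addnS /= rE.
Qed.

Definition psi n := GG n n.

Lemma psi_ge n : (n <= psi n)%N.
Proof.
have [r [rge rE]] := GG_shift 0 n.
by rewrite /psi -[in GG n](add0n n) rE /=.
Qed.

Lemma psi_cvg j : cvgn (fun n => f (psi n) j).
Proof.
have /cvg_ex [L HL] := @step_cvg (GG j) j.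
apply/cvg_ex; exists L.
apply: (@cvg_sub_ex (fun n => f (GG j (step (GG j) j n)) j)) => //.
exists j.+1 => n hn.
have [r [rge rE]] := GG_shift j.+1 (n - j.+1).
exists (r n); split => //.
by rewrite /psi -[in GG n](subnKC hn) rE.
Qed.

End diag.

Section dense.
Variables (R : realType) (k : nat).

Definition enumD (n : nat) : 'rV[R]_k :=
  match @unpickle ('rV[rat]_k) n with
  | Some r => \row_i ratr `|r 0 i|
  | None => 0
  end.

Lemma enumD_nn n : nonneg_vec (enumD n).
Proof.
rewrite /enumD; case: unpickle => [r|] i; rewrite mxE //.
by rewrite ratr_norm.
Qed.

Lemma enumD_dense x : nonneg_vec x -> forall eps : R, 0 < eps ->
  exists n, forall i, `|x 0 i - enumD n 0 i| < eps.
Proof.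
move=> hx eps e0.
have H : forall i : 'I_k, exists q : rat, ratr q \in `](x 0 i), (x 0 i + eps)[.
  by move=> i; apply: rat_in_itvoo; rewrite ltrDl.
have [g Hg] := choice H.
exists (pickle (\row_i g i : 'rV[rat]_k)) => i.
rewrite /enumD pickleK !mxE ratr_norm.
have := Hg i; rewrite in_itv /= => /andP[h1 h2].
rewrite (@ger0_norm _ (ratr (g i))); last by apply: le_trans (ltW h1); exact: hx.
rewrite distrC ger0_norm; last by rewrite subr_ge0 ltW.
by rewrite ltrBlDl.
Qed.

End dense.

Section generic.
Variable R : realType.

Lemma inv_small (e : R) : 0 < e -> exists j : nat, j.+1%:R^-1 < e.
Proof.
move=> e0; exists (Num.trunc e^-1).
rewrite -[X in _ < X](invrK e) ltf_pV2 ?posrE ?invr_gt0 //.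
exact: truncnS_gt.
Qed.

Lemma le_of_inv (a b : R) : (forall j : nat, a <= b + j.+1%:R^-1) -> a <= b.
Proof.
move=> H; rewrite leNgt; apply/negP => ba.
have [j hj] : exists j : nat, j.+1%:R^-1 < a - b by apply: inv_small; rewrite subr_gt0.
have := H j; move: hj; move: (j.+1%:R^-1) => t; lra.
Qed.

Lemma eq_of_inv (a : R) : (forall j : nat, `|a| <= j.+1%:R^-1) -> a = 0.
Proof.
move=> H; apply/normr0_eq0/eqP; rewrite eq_le normr_ge0 andbT.
by apply: le_of_inv => j; rewrite add0r.
Qed.

Lemma closed_lip (k : nat) (F : 'rV[R]_k -> R) (L a : R) : 0 <= L ->
  (forall c c', F c - F c' <= L * `|c - c'|) -> closed [set c | F c <= a].
Proof.
move=> L0 HF c hc /=; rewrite leNgt; apply/negP => aF.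
set del := F c - a.
have d0 : 0 < del by rewrite subr_gt0.
set r := del / (L + 1).
have r0 : 0 < r by rewrite divr_gt0 // ltr_wpDl.
have hr : L * r + r = del.
  have L1 : L + 1 != 0 by rewrite gt_eqF // ltr_wpDl.
  by rewrite /r; field.
have [c' [/= Fc' bc']] := hc _ (nbhsx_ballx c r r0).
move: bc'; rewrite -ball_normE /= => bc'.
have h1 := HF c c'.
have h2 : L * `|c - c'| <= L * r by apply: ler_wpM2l => //; exact: ltW.
rewrite /del in hr; lra.
Qed.

Lemma ev_seq (I : eqType) (s : seq I) (P : I -> nat -> Prop) :
  (forall i, i \in s -> exists N, forall n, (N <= n)%N -> P i n) ->
  exists N, forall n, (N <= n)%N -> forall i, i \in s -> P i n.
Proof.
elim: s => [|a s IH] H; first by exists 0%N.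
have [N1 H1] := H a (mem_head _ _).
have [N2 H2] : exists N, forall n, (N <= n)%N -> forall i, i \in s -> P i n.
  by apply: IH => i hi; apply: H; rewrite in_cons hi orbT.
exists (maxn N1 N2) => n; rewrite geq_max => /andP[h1 h2] i.
rewrite in_cons => /orP[/eqP ->|hi]; [exact: H1|exact: H2].
Qed.

Section esup.
Variables (u : nat -> R) (B : R).
Hypothesis u0 : forall n, 0 <= u n.
Hypothesis uB : forall n, u n <= B.
Local Notation L := (limn_esup (fun n => (u n)%:E)).

Lemma esups_ge n : (L <= esups (fun n => (u n)%:E) n)%E.
Proof.
rewrite limn_esup_lim; apply: lime_le; first exact: is_cvg_esups.
exists n => // m /= nm; exact: nonincreasing_esups.
Qed.

Lemma esups_le n : (esups (fun n => (u n)%:E) n <= B%:E)%E.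
Proof. by apply: ge_ereal_sup => _ [m _ <-]; rewrite lee_fin. Qed.

Lemma L_ge0 : (0 <= L)%E.
Proof.
rewrite limn_esup_lim; apply: lime_ge; first exact: is_cvg_esups.
apply: nearW => n; apply: (@le_trans _ _ (u n)%:E); first by rewrite lee_fin.
by apply: ereal_sup_ubound; exists n => /=.
Qed.

Lemma L_le : (L <= B%:E)%E.
Proof. exact: le_trans (esups_ge 0) (esups_le 0). Qed.

Lemma L_fin : L \is a fin_num.
Proof.
by rewrite ge0_fin_numE ?L_ge0 // (le_lt_trans L_le) ?ltry.
Qed.

Lemma L_freq N (e : R) : 0 < e -> exists n, (N <= n)%N /\ fine L - e < u n.
Proof.
move=> e0.
have : ((fine L - e)%:E < esups (fun n => (u n)%:E) N)%E.
  apply: lt_le_trans (esups_ge N).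
  by rewrite -[X in (_ < X)%E](fineK L_fin) lte_fin ltrBlDr ltrDl.
move=> /ereal_sup_gt [_ [m /= Nm <-]]; rewrite lte_fin => h.
by exists m.
Qed.

Lemma L_ev (e : R) : 0 < e -> exists N, forall n, (N <= n)%N -> u n < fine L + e.
Proof.
move=> e0.
have HL : L = ereal_inf (range (esups (fun n => (u n)%:E))).
  rewrite limn_esup_lim; apply: cvg_lim => //; exact: cvg_esups_inf.
have : (ereal_inf (range (esups (fun n => (u n)%:E))) < (fine L + e)%:E)%E.
  by rewrite -HL -[X in (X < _)%E](fineK L_fin) lte_fin ltrDl.
move=> /ereal_inf_lt [_ [N _ <-]] h; exists N => n Nn.
rewrite -lte_fin; apply: le_lt_trans h.
apply: le_trans (nonincreasing_esups _ Nn).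
by apply: ereal_sup_ubound; exists n => /=.
Qed.

End esup.

Lemma esup_mono (u v : nat -> R) : (forall n, u n <= v n) ->
  (limn_esup (fun n => (u n)%:E) <= limn_esup (fun n => (v n)%:E))%E.
Proof.
move=> uv; rewrite !limn_esup_lim; apply: lee_lim.
- exact: is_cvg_esups.
- exact: is_cvg_esups.
apply: nearW => n; apply: ge_ereal_sup => _ [m /= nm <-].
apply: (@le_trans _ _ (v m)%:E); first by rewrite lee_fin.
by apply: ereal_sup_ubound; exists m.
Qed.

End generic.
Section Bsec.
Context (d : measure_display) (T : measurableType d) (R : realType)
  (P : probability T R) (k : nat) (Gamma : set 'rV[R]_k)
  (X : 'I_k -> T -> R) (M : R).
Hypothesis mX : forall i, measurable_fun setT (X i).
Hypothesis nX : forall w, nonneg_vec (rvec X w).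
Hypothesis iX : (\int[P]_w (`| rvec X w |)%:E < +oo)%E.
Hypothesis hG : forall g, Gamma g -> nonneg_vec g.
Hypothesis M0 : 0 <= M.
Hypothesis hM : forall g, Gamma g -> forall i, g 0 i <= M.

Definition sX w := sig (rvec X w).

Lemma meas_norm : measurable_fun setT (fun w => `|rvec X w|).
Proof.
have -> : (fun w => `|rvec X w|) =
    (fun w => \big[Num.max/0]_(ij : 'I_1 * 'I_k) `|X ij.2 w|).
  apply/funext => w; rewrite [LHS]mx_normrE; apply: eq_bigr => ij _.
  by rewrite mxE.
suff H : forall s : seq ('I_1 * 'I_k),
    measurable_fun setT (fun w => \big[Num.max/0]_(ij <- s) `|X ij.2 w|).
  exact: H.
elim => [|a s IH].
  rewrite (_ : (fun w => _) = (fun=> 0)); last first.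
    by apply/funext => w; rewrite big_nil.
  exact: measurable_cst.
rewrite (_ : (fun w => _) = (fun w => Num.max `|X a.2 w|
    (\big[Num.max/0]_(ij <- s) `|X ij.2 w|))); last first.
  by apply/funext => w; rewrite big_cons.
apply: measurable_maxr => //.
exact: measurableT_comp.
Qed.

Lemma meas_sX : measurable_fun setT sX.
Proof.
rewrite /sX /sig.
under eq_fun do under eq_bigr do rewrite mxE.
by apply: measurable_sum.
Qed.

Lemma int_norm : P.-integrable setT (fun w => (`|rvec X w|)%:E).
Proof.
apply/integrableP; split; first exact/measurable_EFinP/meas_norm.
by under eq_integral do rewrite abse_EFin normr_id.
Qed.

Lemma int_sX : P.-integrable setT (fun w => (sX w)%:E).
Proof.
apply: (le_integrable measurableT _ _ (integrableZl measurableT k%:R int_norm)).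
  exact/measurable_EFinP/meas_sX.
move=> w _ /=; rewrite lee_fin.
rewrite ger0_norm; last exact: sig_ge0.
rewrite ger0_norm; last by rewrite mulr_ge0.
have -> : (k%:R : R) = \sum_(i < k) (1 : R) by rewrite sumr_const card_ord.
rewrite /sX /sig mulr_suml.
apply: ler_sum => i _; rewrite mul1r.
exact: le_trans (ler_norm _) (entry_le_norm _ _).
Qed.

Lemma int_MsX : P.-integrable setT (fun w => (M * sX w)%:E).
Proof.
by under eq_fun do rewrite EFinM; apply: (integrableZl measurableT) int_sX.
Qed.

Lemma int_cst (c : R) : P.-integrable setT (fun w : T => c%:E).
Proof. exact: (finite_measure_integrable_cst P c measurableT). Qed.

Section adm.
Variables (q : 'rV[R]_k -> 'rV[R]_k) (s : 'rV[R]_k -> R).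
Hypothesis Hadm : admissible_mech Gamma X q s.

Lemma adm_s0 : s 0 <= 0.
Proof.
case: Hadm => _ _ HIR _ _; have := HIR 0 (@nonneg0 R k).
by rewrite dotv0 sub0r oppr_ge0.
Qed.

Lemma adm_lb x : nonneg_vec x -> s 0 <= s x.
Proof.
case: Hadm => _ _ _ Hmon _ hx.
by apply: Hmon => //; [exact: nonneg0|exact: vec_le0].
Qed.

Lemma adm_ub x : nonneg_vec x -> s x <= M * sig x.
Proof.
case: Hadm => Hq _ HIR _ _ hx.
have := HIR x hx; rewrite subr_ge0 => /le_trans; apply.
apply: dotv_le => //; [exact/hG/Hq|exact/hM/Hq].
Qed.

Lemma adm_int : P.-integrable setT (fun w => (s (rvec X w))%:E).
Proof.
case: (Hadm) => _ _ _ _ ms.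
have := integrableD measurableT (int_cst `|s 0|) int_MsX.
apply: (le_integrable measurableT); first exact/measurable_EFinP.
move=> w _ /=; rewrite lee_fin.
have hw := nX w.
have h1 := adm_lb hw; have h2 := adm_ub hw.
have h3 : 0 <= M * sX w by rewrite mulr_ge0 // sig_ge0.
rewrite [X in _ <= X]ger0_norm ?addr_ge0 //.
have [s0|s0] := leP 0 (s (rvec X w)).
  by rewrite ger0_norm // (le_trans h2) // lerDr.
rewrite ltr0_norm // (@le_trans _ _ (- s 0)) ?lerN2 //.
by rewrite -normrN (le_trans (ler_norm _)) // lerDl.
Qed.

Lemma adm_rev_le : (revenue P X s <= \int[P]_w (M * sX w)%:E)%E.
Proof.
apply: (le_integral measurableT) => //; first exact: adm_int; first exact: int_MsX.
by move=> w _; rewrite lee_fin adm_ub.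
Qed.

Lemma shift_adm : admissible_mech Gamma X q (fun x => s x - s 0).
Proof.
case: Hadm => Hq HIC HIR Hmon ms; split => //.
- by move=> x y hx hy; have := HIC x y hx hy; lra.
- move=> x hx; have h1 := HIC x 0 hx (@nonneg0 R k).
  have h2 : 0 <= dotv (q 0) x.
    by apply: dotv_ge0 => //; exact/hG/Hq/nonneg0.
  lra.
- by move=> x y hx hy hxy; rewrite lerD2r; apply: Hmon.
- by apply: measurable_funB => //; exact: measurable_cst.
Qed.

End adm.

Lemma shift_rev q s : admissible_mech Gamma X q s -> (revenue P X s <= revenue P X (fun x => (s x - s 0)%R))%E.
Proof.
move=> Hadm.
apply: (le_integral measurableT) => //; first exact: (adm_int Hadm).
  exact: (adm_int (shift_adm Hadm)).
by move=> w _; rewrite lee_fin lerDl oppr_ge0 (adm_s0 Hadm).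
Qed.


Hypothesis hne : Gamma !=set0.

Lemma rev_le_MonRev q s : admissible_mech Gamma X q s ->
  (revenue P X s <= MonRev P Gamma X)%E.
Proof. by move=> Hadm; apply: ereal_sup_ubound; exists s => //; exists q. Qed.

Lemma MonRev_ub : (MonRev P Gamma X <= \int[P]_w (M * sX w)%:E)%E.
Proof.
by apply: ge_ereal_sup => _ [s [q Hadm] <-]; exact: (adm_rev_le Hadm).
Qed.

Lemma MonRev_ge0 : (0 <= MonRev P Gamma X)%E.
Proof.
case: hne => g0 Gg0.
have Hadm : admissible_mech Gamma X (fun=> g0) (fun=> 0).
  split.
  - by move=> x _.
  - by move=> x y _ _; rewrite !subr0.
  - by move=> x hx; rewrite subr0; apply: dotv_ge0 => //; exact: hG.
  - by move=> x y _ _ _.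
  - exact: measurable_cst.
have := rev_le_MonRev Hadm; apply: le_trans.
by rewrite /revenue integral0.
Qed.

Lemma MonRev_fin : MonRev P Gamma X \is a fin_num.
Proof.
rewrite ge0_fin_numE; last exact: MonRev_ge0.
apply: le_lt_trans MonRev_ub _.
have := integrable_fin_num measurableT int_MsX.
by rewrite fin_numE => /andP[_ H]; rewrite ltey.
Qed.

Lemma approx (n : nat) : exists qs : ('rV[R]_k -> 'rV[R]_k) * ('rV[R]_k -> R),
  [/\ admissible_mech Gamma X qs.1 qs.2, qs.2 0 = 0 &
  ((fine (MonRev P Gamma X) - n.+1%:R^-1)%:E < revenue P X qs.2)%E].
Proof.
have Hm := MonRev_fin.
have : ((fine (MonRev P Gamma X) - n.+1%:R^-1)%:E < MonRev P Gamma X)%E.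
  rewrite -[X in (_ < X)%E](fineK Hm) lte_fin ltrBlDr ltrDl invr_gt0 //.
move=> /ereal_sup_gt [_ [s [q Hadm] <-] Hlt].
exists (q, fun x => s x - s 0); split.
- exact: shift_adm.
- by rewrite /= subrr.
- apply: lt_le_trans Hlt _; exact: (shift_rev Hadm).
Qed.

Hypothesis cG : compact Gamma.

Definition qs n := projT1 (cid (approx n)).
Definition qn n := (qs n).1.
Definition sn n := (qs n).2.

Lemma qs_adm n : admissible_mech Gamma X (qn n) (sn n).
Proof. by rewrite /qn /sn /qs; case: cid => ? []. Qed.

Lemma qs_s0 n : sn n 0 = 0.
Proof. by rewrite /qn /sn /qs; case: cid => ? []. Qed.

Lemma qs_rev n :
  ((fine (MonRev P Gamma X) - n.+1%:R^-1)%:E < revenue P X (sn n))%E.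
Proof. by rewrite /qn /sn /qs; case: cid => ? []. Qed.

Definition bn n x := dotv (qn n x) x - sn n x.

Lemma sn_ge0 n x : nonneg_vec x -> 0 <= sn n x.
Proof. by move=> hx; rewrite -(qs_s0 n); apply: (adm_lb (qs_adm n)). Qed.

Lemma sn_le n x : nonneg_vec x -> sn n x <= M * sig x.
Proof. by move=> hx; apply: (adm_ub (qs_adm n)). Qed.

Lemma bn_ge0 n x : nonneg_vec x -> 0 <= bn n x.
Proof. by case: (qs_adm n) => _ _ HIR _ _ hx; apply: HIR. Qed.

Lemma bn_le n x : nonneg_vec x -> bn n x <= M * sig x.
Proof.
case: (qs_adm n) => Hq _ _ _ _ hx.
have h1 := sn_ge0 n hx.
have h2 : dotv (qn n x) x <= M * sig x.
  by apply: dotv_le => //; [exact/hG/Hq|exact/hM/Hq].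
rewrite /bn; lra.
Qed.

Lemma bn_sub n x y : nonneg_vec x -> nonneg_vec y ->
  dotv (qn n x) y - dotv (qn n x) x <= bn n y - bn n x.
Proof.
case: (qs_adm n) => _ HIC _ _ _ hx hy.
have := HIC y x hy hx; rewrite /bn; lra.
Qed.

Lemma bn_lip n x y : nonneg_vec x -> nonneg_vec y ->
  bn n x - bn n y <= M * dist1 x y.
Proof.
case: (qs_adm n) => Hq _ _ _ _ hx hy.
have h1 := bn_sub n hx hy.
have h2 : dotv (qn n x) x - dotv (qn n x) y <= M * dist1 x y.
  by apply: dotv_lip; [exact/hG/Hq|exact/hM/Hq].
lra.
Qed.

Lemma bn_abs n x y : nonneg_vec x -> nonneg_vec y ->
  `|bn n x - bn n y| <= M * dist1 x y.
Proof.
move=> hx hy; have h1 := bn_lip n hx hy; have h2 := bn_lip n hy hx.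
rewrite dist1C in h2.
by rewrite ler_norml; apply/andP; split; lra.
Qed.

Definition fd n j := bn n (@enumD R k j).

Lemma fd_bnd j : exists B : R, forall n, `|fd n j| <= B.
Proof.
exists (M * sig (@enumD R k j)) => n.
have hx := @enumD_nn R k j.
by rewrite ger0_norm ?bn_ge0 ?bn_le.
Qed.

Definition ps := psi fd_bnd.

Definition bl x := limn (fun n => bn (ps n) x).

Lemma bl_cvg x : nonneg_vec x -> (fun n => bn (ps n) x) @ \oo --> bl x.
Proof.
move=> hx; apply/cauchy_cvgP/cauchy_exP => e e0.
set e' := e / (3 * (M * k%:R + 1)).
have Mk0 : 0 <= M * k%:R by rewrite mulr_ge0.
have e'0 : 0 < e' by rewrite divr_gt0 // mulr_gt0 // ltr_wpDl.
have [j hj] := enumD_dense hx e'0.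
set dj := @enumD R k j.
have hdj : nonneg_vec dj := @enumD_nn R k j.
have Hd : dist1 x dj <= k%:R * e'.
  have -> : (k%:R : R) * e' = \sum_(i < k) e' by rewrite sumr_const card_ord mulr_natl.
  by apply: ler_sum => i _; apply: ltW.
have HMd : M * dist1 x dj <= e / 3.
  apply: le_trans (ler_wpM2l M0 Hd) _; rewrite mulrA.
  have -> : e / 3 = (M * k%:R + 1) * e'.
    rewrite /e'; field; rewrite gt_eqF // ltr_wpDl //.
  by apply: ler_wpM2r; [exact: ltW|rewrite lerDl].
have cv := @psi_cvg R fd fd_bnd j.
exists (limn (fun n => fd (ps n) j)).
have e30 : 0 < e / 3 by rewrite divr_gt0.
move/cvgrPdist_lt : cv => /(_ (e / 3) e30) [N _ HN].
exists N => // n /= Nn; rewrite -ball_normE /=.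
have h1 := HN n Nn; rewrite /= /fd -/dj in h1.
have h2 := bn_abs (ps n) hdj hx; rewrite dist1C in h2.
apply: le_lt_trans (ler_distD (bn (ps n) dj) _ _) _.
lra.
Qed.

Lemma bl_ge0 x : nonneg_vec x -> 0 <= bl x.
Proof.
move=> hx; apply: limr_ge; first by apply/cvg_ex; exists (bl x); exact: bl_cvg.
by apply: nearW => n; apply: bn_ge0.
Qed.

Definition sl x := fine (limn_esup (fun n => (sn (ps n) x)%:E)).

Lemma sl_fin x : nonneg_vec x ->
  limn_esup (fun n => (sn (ps n) x)%:E) \is a fin_num.
Proof.
move=> hx; apply: (@L_fin _ _ (M * sig x)).
  by move=> n; apply: sn_ge0.
by move=> n; apply: sn_le.
Qed.

Lemma sl_bnd x : nonneg_vec x -> 0 <= sl x <= M * sig x.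
Proof.
move=> hx.
have h0 : forall n, 0 <= sn (ps n) x by move=> n; apply: sn_ge0.
have h1 : forall n, sn (ps n) x <= M * sig x by move=> n; apply: sn_le.
rewrite /sl; apply/andP; split.
  by rewrite -lee_fin fineK ?(sl_fin hx) //; exact: (L_ge0 h0).
by rewrite -lee_fin fineK ?(sl_fin hx) //; exact: (L_le h1).
Qed.

Lemma sumabs_ge0 (y : 'rV[R]_k) : 0 <= \sum_(i < k) `|y 0 i|.
Proof. by apply: sumr_ge0. Qed.

Import finmap.
Lemma exists_c x : nonneg_vec x -> exists c, [/\ Gamma c,
  dotv c x = sl x + bl x &
  forall y, nonneg_vec y -> dotv c y - dotv c x <= bl y - bl x].
Proof.
move=> hx.
pose I := (nat * 'rV[R]_k)%type.
pose D := [set p : I | nonneg_vec p.2].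
pose g1 (p : I) := [set c : 'rV[R]_k |
  `|dotv c x - (sl x + bl x)| <= p.1.+1%:R^-1].
pose g2 (p : I) := [set c : 'rV[R]_k |
  dotv c p.2 - dotv c x <= bl p.2 - bl x + p.1.+1%:R^-1].
have Gcl : closed Gamma := compact_closed (@norm_hausdorff _ _) cG.
have cl1 p : closed (g1 p).
  apply: (@closed_lip _ _ _ (\sum_(i < k) `|x 0 i|)); first exact: sumabs_ge0.
  move=> c c'; apply: le_trans (dotv_norm_lip c c' x).
  apply: le_trans (lerB_dist _ _) _; rewrite le_eqVlt; apply/orP; left.
  by apply/eqP; congr (`|_|); ring.
have cl2 p : closed (g2 p).
  apply: (@closed_lip _ _ _ (\sum_(i < k) `|p.2 0 i| + \sum_(i < k) `|x 0 i|)).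
    by rewrite addr_ge0 // sumabs_ge0.
  move=> c c'.
  have h1 := dotv_norm_lip c c' p.2; have h2 := dotv_norm_lip c' c x.
  rewrite [X in _ <= _ * X]distrC in h2.
  have h3 := ler_norm (dotv c p.2 - dotv c' p.2).
  have h4 := ler_norm (dotv c' x - dotv c x).
  rewrite mulrDl; lra.
have := cG; rewrite compact_In0 => /(_ _ D (fun p => Gamma `&` (g1 p `&` g2 p))).
case.
- exists (fun p => g1 p `&` g2 p) => // p _; exact: closedI.
- move=> D' sD'.
  have sDn : forall p, p \in D' -> nonneg_vec p.2.
    by move=> p pD; have := sD' _ pD; rewrite in_setE.
  pose J := \max_(p <- finmap.enum_fset D') p.1.
  have HJ : forall p, p \in D' -> (p.1 <= J)%N.
    by move=> p pD; apply: (@leq_bigmax_seq _ _ xpredT (fun p : I => p.1)).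
  set eps : R := J.+1%:R^-1.
  have eps0 : 0 < eps by rewrite invr_gt0.
  have Heps p : p \in D' -> eps <= p.1.+1%:R^-1.
    move=> pD; rewrite lef_pV2 ?posrE // ler_nat ltnS; exact: HJ.
  set e2 := eps / 2.
  have e20 : 0 < e2 by rewrite divr_gt0.
  have [N1 HN1] : exists N, forall n, (N <= n)%N -> forall p, p \in D' ->
      `|bn (ps n) p.2 - bl p.2| < e2.
    have [N HN] : exists N, forall n, (N <= n)%N -> forall p,
        p \in enum_fset D' -> `|bn (ps n) p.2 - bl p.2| < e2.
      apply: ev_seq => p pD.
      have hp : nonneg_vec p.2 by apply: sDn.
      move/cvgrPdist_lt : (bl_cvg hp) => /(_ e2 e20) [N _ HN].
      by exists N => n Nn; rewrite distrC; apply: HN.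
    by exists N => n Nn p pD; apply: HN.
  have [N2 HN2] : exists N, forall n, (N <= n)%N -> `|bn (ps n) x - bl x| < e2.
    move/cvgrPdist_lt : (bl_cvg hx) => /(_ e2 e20) [N _ HN].
    by exists N => n Nn; rewrite distrC; apply: HN.
  have h0 : forall n, 0 <= sn (ps n) x by move=> n; apply: sn_ge0.
  have h1 : forall n, sn (ps n) x <= M * sig x by move=> n; apply: sn_le.
  have [N3 HN3] := L_ev h0 h1 e20.
  have [n [Nn Hn]] := L_freq h0 h1 (maxn N1 (maxn N2 N3)) e20.
  move: Nn; rewrite !geq_max => /and3P[n1 n2 n3].
  have Hn3 := HN3 n n3; have Hn2 := HN2 n n2.
  rewrite -/(sl x) in Hn Hn3.
  case: (qs_adm (ps n)) => Hq _ _ _ _.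
  exists (qn (ps n) x) => p /= pD; split; first exact: Hq.
  have hp : nonneg_vec p.2 by apply: sDn.
  have He := Heps p pD.
  split => /=.
  + rewrite /g1 /=.
    have -> : dotv (qn (ps n) x) x = bn (ps n) x + sn (ps n) x.
      by rewrite /bn subrK.
    apply: le_trans He.
    rewrite (_ : bn (ps n) x + sn (ps n) x - (sl x + bl x) =
      (bn (ps n) x - bl x) + (sn (ps n) x - sl x)); last by ring.
    apply: le_trans (ler_normD _ _) _.
    have : `|sn (ps n) x - sl x| < e2.
      by rewrite ltr_norml; apply/andP; split; lra.
    rewrite /e2 in Hn2 *; lra.
  + rewrite /g2 /=.
    have hs := bn_sub (ps n) hx hp.
    have := HN1 n n1 p pD; rewrite ltr_norml => /andP[a1 a2].
    move: Hn2; rewrite ltr_norml => /andP[b1 b2].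
    rewrite /e2 in a1 a2 b1 b2.
    move: He; move: (p.1.+1%:R^-1) => t He; lra.
- move=> c Hc; exists c.
  have Hc' : forall j : nat, forall y, nonneg_vec y ->
      [/\ Gamma c, `|dotv c x - (sl x + bl x)| <= j.+1%:R^-1 &
        dotv c y - dotv c x <= bl y - bl x + j.+1%:R^-1].
    by move=> j y hy; have [? [? ?]] := Hc (j, y) hy.
  split.
  + by have [] := Hc' 0%N x hx.
  + apply/eqP; rewrite -subr_eq0; apply/eqP; apply: eq_of_inv => j.
    by have [] := Hc' j x hx.
  + move=> y hy; apply: le_of_inv => j.
    by have [] := Hc' j y hy.
Qed.

Definition g0 : 'rV[R]_k := projT1 (cid hne).

Definition qf x : 'rV[R]_k :=
  match pselect (nonneg_vec x) with
  | left hx => projT1 (cid (exists_c hx))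
  | right _ => g0
  end.

Lemma qf_prop x : nonneg_vec x -> [/\ Gamma (qf x),
  dotv (qf x) x = sl x + bl x &
  forall y, nonneg_vec y -> dotv (qf x) y - dotv (qf x) x <= bl y - bl x].
Proof.
move=> hx; rewrite /qf; case: pselect => [hx'|//].
by case: cid => c /= H.
Qed.

Lemma sl_mono x y : nonneg_vec x -> nonneg_vec y -> vec_le x y -> sl x <= sl y.
Proof.
move=> hx hy hxy; rewrite /sl fine_le ?sl_fin //.
apply: esup_mono => n; case: (qs_adm (ps n)) => _ _ _ Hmon _.
exact: Hmon.
Qed.

Lemma mech_adm : admissible_mech Gamma X qf sl.
Proof.
split.
- by move=> x hx; case: (qf_prop hx).
- move=> x y hx hy; case: (qf_prop hx) => _ ex _; case: (qf_prop hy) => _ ey sy.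
  have := sy x hx; lra.
- move=> x hx; case: (qf_prop hx) => _ ex _; have := bl_ge0 hx; lra.
- exact: sl_mono.
- rewrite /sl; apply: measurableT_comp; first exact: fine_measurable.
  apply: measurable_fun_limn_esup => n.
  apply/measurable_EFinP; case: (qs_adm (ps n)) => _ _ _ _ ms; exact: ms.
Qed.

Lemma einf_eq (a : R) (u : nat -> R) (B : R) : (forall n, 0 <= u n) ->
  (forall n, u n <= B) ->
  limn_einf (fun n => (a%:E - (u n)%:E)%E) =
    (a - fine (limn_esup (fun n => (u n)%:E)))%R%:E.
Proof.
move=> u0 uB.
have -> : (fun n => (a%:E - (u n)%:E)%E) =
    (fun n => (a%:E + (-%E \o (fun n => (u n)%:E)) n)%E) by [].
rewrite limn_einf_shift // limn_einfN.
by rewrite -[X in (_ - X)%E](fineK (L_fin u0 uB)) EFinB.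
Qed.

Lemma rev_ge : (MonRev P Gamma X <= revenue P X sl)%E.
Proof.
set m := fine (MonRev P Gamma X).
have mE : MonRev P Gamma X = m%:E by rewrite fineK // MonRev_fin.
set I := (\int[P]_w (M * sX w)%R%:E)%E.
have Ifin : I \is a fin_num := integrable_fin_num measurableT int_MsX.
pose F n w := ((M * sX w)%R%:E - (sn (ps n) (rvec X w))%:E)%E.
have mF n : measurable_fun setT (F n).
  have -> : F n = (fun w => (M * sX w - sn (ps n) (rvec X w))%:E).
    by apply/funext => w; rewrite /F EFinB.
  apply/measurable_EFinP; apply: measurable_funB.
    exact: measurable_funM (measurable_cst _) meas_sX.
  by case: (qs_adm (ps n)) => _ _ _ _ ms; exact: ms.
have F0 n w : (setT w) -> (0 <= F n w)%E.
  by move=> _; rewrite /F -EFinB lee_fin subr_ge0; apply: sn_le.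
have := fatou P measurableT mF F0.
have -> : (\int[P]_w limn_einf (F^~ w) =
    \int[P]_w ((M * sX w)%R%:E - (sl (rvec X w))%:E))%E.
  apply: eq_integral => w _; rewrite /F.
  rewrite (@einf_eq (M * sX w) _ (M * sX w)).
  - by rewrite EFinB.
  - by move=> n; apply: sn_ge0.
  - by move=> n; apply: sn_le.
rewrite (integralB_EFin measurableT int_MsX (adm_int mech_adm)).
have -> : (fun n => (\int[P]_w F n w)%E) =
    (fun n => I - revenue P X (sn (ps n)))%E.
  apply/funext => n; rewrite /F.
  exact: (integralB_EFin measurableT int_MsX (adm_int (qs_adm (ps n)))).
move=> Hf.
have Hb : (limn_einf (fun n => I - revenue P X (sn (ps n))) <= I - m%:E)%E.
  apply/lee_addgt0Pr => e e0.
  rewrite limn_einf_lim; apply: lime_le; first exact: is_cvg_einfs.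
  have [j hj] := inv_small e0.
  exists j => // n /= jn.
  apply: le_trans; first by apply: ereal_inf_lbound; exists n => /=.
  set r := revenue P X (sn (ps n)).
  have hr := qs_rev (ps n); rewrite -/r -/m in hr.
  have hr2 : (r <= m%:E)%E by rewrite -mE; exact: rev_le_MonRev (qs_adm _).
  have rfin : r \is a fin_num.
    rewrite fin_numElt; apply/andP; split.
      by apply: lt_trans hr; rewrite ltNye.
    by apply: le_lt_trans hr2 _; rewrite ltry.
  have hps : (ps n).+1%:R^-1 <= j.+1%:R^-1 :> R.
    rewrite lef_pV2 ?posrE // ler_nat ltnS.
    exact: leq_trans jn (@psi_ge R fd fd_bnd n).
  move: hr hr2; rewrite -(fineK rfin) -(fineK Ifin) !lte_fin !lee_fin.
  move: hps hj; move: ((ps n).+1%:R^-1) (j.+1%:R^-1) => t1 t2.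
  lra.
have H2 := le_trans Hf Hb.
have rfin : (\int[P]_x (sl (rvec X x))%:E)%E \is a fin_num.
  exact: (integrable_fin_num measurableT (adm_int mech_adm)).
rewrite /revenue mE.
move: H2; rewrite -/I -(fineK rfin) -(fineK Ifin) -!EFinB !lee_fin => h.
lra.
Qed.

End Bsec.

Unset Implicit Arguments.

Theorem theorem2 (d : measure_display) (T : measurableType d) (R : realType)
  (P : probability T R) (k : nat) (Gamma : set 'rV[R]_k)
  (X : 'I_k -> T -> R) :
  (1 <= k)%N ->
  compact Gamma -> Gamma !=set0 -> (forall g, Gamma g -> nonneg_vec g) ->
  (forall i, measurable_fun setT (X i)) ->
  (forall w, nonneg_vec (rvec X w)) ->
  (\int[P]_w (`| rvec X w |)%:E < +oo)%E ->
  exists (q : 'rV[R]_k -> 'rV[R]_k) (s : 'rV[R]_k -> R),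
    admissible_mech Gamma X q s /\ revenue P X s = MonRev P Gamma X.
Proof.
move=> _ cG hne hG mX nX iX.
have [M [M0 HM]] := compact_bnd cG.
have hM : forall g, Gamma g -> forall i, g 0 i <= M.
  by move=> g Gg i; apply: le_trans (ler_norm _) (HM g Gg i).
have Hadm := mech_adm mX nX iX hG M0 hM hne cG.
eexists; eexists; split; first exact: Hadm.
apply/eqP; rewrite eq_le; apply/andP; split.
  exact: rev_le_MonRev Hadm.
exact: rev_ge.
Qed.
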